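(* Let $a\ge 1$ be an integer and let $S\subseteq\mathbb{F}_2^a$ and $T_a^{(i)}$ be as defined in the context. Then $T_a^{(i)}\cap T_a^{(j)}=\emptyset$ for all $i,j\in S$ with $i\neq j$.
   Context: Elements of $Z_{2^a}=\{0,\dots,2^a-1\}$ are identified with their binary expansions in $\mathbb{F}_2^a$; $\oplus$ is bitwise XOR; for $K\subset Z_{2^a}$, $i\oplus K=\{i\oplus k:k\in K\}$. Let $b=\lfloor\log_2 a\rfloor+1$ (so $2^{b-1}\le a<2^b$) and $m=2^b-a-1$. $T_a$: let $P_a=\{0,2^0,2^1,\dots,2^{a-1}\}$; let $Q_a=\emptyset$ if $a+1$ is a power of 2, and otherwise $Q_a=\{1\oplus 2^{a-m},\dots,1\oplus 2^{a-1}\}$; $T_a=P_a\cup Q_a$, $T_a^{(i)}=i\oplus T_a$. $S$: Let $M_a=\{0<x\le a: x \text{ not a power of } 2\}$, each $x\in M_a$ written $x=\sum_{j=0}^{b-1}x_j2^j$, $x_j\in\{0,1\}$. Define $g(x)=2x$ if $x_{b-1}=0$ and $g(x)=2x+1-2^b$ if $x_{b-1}=1$; let $\tilde M_a=g(M_a)$ and $H_a=\tilde M_a\setminus M_a$. Define $f':\tilde M_a\to M_a$ by $f'(x)=x$ if $x\in M_a\cap\tilde M_a$ and $f'(x)=x+1-2\lceil m/2\rceil$ if $x\in H_a$, and $f=f'\circ g$. Define $h(x)=2^{f(x)-1}+\sum_{j=0}^{b-2}x_j2^{2^{j+1}-1}+x_{b-1}$ for $x\in M_a$, let $M_a'=\{h(x):x\in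 M_a\}\subseteq Z_{2^a}\cong\mathbb{F}_2^a$, and let $S$ be the $\mathbb{F}_2$-linear span of $M_a'$ in $\mathbb{F}_2^a$. *)

(* Defs.v *)
From mathcomp Require Import all_boot.
Set Implicit Arguments. Unset Strict Implicit. Unset Printing Implicit Defensive.

(* Elements of Z_{2^a} are naturals < 2^a, identified with their binary
   expansions; bitwise XOR is Nat.lxor. *)
Definition xorn (x y : nat) : nat := Nat.lxor x y.

Definition bitn (x j : nat) : bool := odd (x %/ 2 ^ j).

Definition is_pow2 (x : nat) : bool := has (fun k => x == 2 ^ k) (iota 0 x.+1).

Definition bpar (a : nat) : nat := (trunc_log 2 a).+1.
Definition mpar (a : nat) : nat := 2 ^ bpar a - a - 1.

Definition Pset (a : nat) : seq nat := 0 :: [seq 2 ^ k | k <- iota 0 a].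
Definition Qset (a : nat) : seq nat :=
  if is_pow2 a.+1 then [::]
  else [seq xorn 1 (2 ^ k) | k <- iota (a - mpar a) (mpar a)].
Definition Tset (a : nat) : seq nat := Pset a ++ Qset a.
Definition Tshift (a i : nat) : seq nat := [seq xorn i t | t <- Tset a].

Definition Mset (a : nat) : seq nat :=
  [seq x <- iota 1 a | ~~ is_pow2 x].
Definition gmap (a x : nat) : nat :=
  if bitn x (bpar a).-1 then (2 * x).+1 - 2 ^ bpar a else 2 * x.
Definition Mtilde (a : nat) : seq nat := [seq gmap a x | x <- Mset a].
Definition Hset (a : nat) : seq nat := [seq x <- Mtilde a | x \notin Mset a].
Definition f'map (a x : nat) : nat :=
  if x \in Mset a then x else x + 1 - 2 * uphalf (mpar a).
Definition fmap (a x : nat) : nat := f'map a (gmap a x).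
Definition hmap (a x : nat) : nat :=
  2 ^ (fmap a x - 1)
  + \sum_(0 <= j < (bpar a).-1) bitn x j * 2 ^ (2 ^ j.+1 - 1)
  + bitn x (bpar a).-1.
Definition M'set (a : nat) : seq nat := [seq hmap a x | x <- Mset a].

(* S = F_2-linear span of M_a' in F_2^a: all XOR-sums of finitely many
   elements of M_a' (over F_2 the only coefficients are 0 and 1). *)
Definition inS (a i : nat) : Prop :=
  exists s : seq nat, all (fun v => v \in M'set a) s /\ foldr xorn 0 s = i.

(* Main.v *)
From Stdlib Require Import Lia PeanoNat.
From HB Require Import structures.
Require Import Defs.
From mathcomp Require Import all_boot.

Lemma xornA : associative xorn.
Proof. by move=> x y z; rewrite /xorn Nat.lxor_assoc. Qed.
Lemma xornC : commutative xorn.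
Proof. by move=> x y; rewrite /xorn Nat.lxor_comm. Qed.
Lemma xor0n : left_id 0 xorn.
Proof. by move=> x; rewrite /xorn Nat.lxor_0_l. Qed.
HB.instance Definition _ := Monoid.isComLaw.Build nat 0 xorn xornA xornC xor0n.

Lemma oddE n : Nat.odd n = odd n.
Proof.
elim: n => [//|n IH]. by rewrite Nat.odd_succ -Nat.negb_odd IH.
Qed.

Lemma halfE n : Nat.div2 n = n./2.
Proof.
have h1 := Nat.div2_odd n. have h2 := odd_double_half n.
rewrite oddE in h1. move: h1 h2; case: (odd n) => /= h1 h2;
rewrite -muln2 ?addnE mulnE in h2; lia.
Qed.

Lemma bitn_half x n : bitn x n.+1 = bitn x./2 n.
Proof. by rewrite /bitn expnS divnMA divn2. Qed.

Lemma testbitE x p : Nat.testbit x p = bitn x p.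
Proof.
elim: p x => [|p IH] x.
  by rewrite Nat.bit0_odd oddE /bitn expn0 divn1.
by rewrite bitn_half -IH -halfE Nat.div2_div Nat.div2_bits.
Qed.

Lemma expnE' m n : m ^ n = Nat.pow m n.
Proof. elim: n => [//|n IH]. by rewrite expnS Nat.pow_succ_r' IH mulnE. Qed.

Lemma testbit_pow2 e p : Nat.testbit (2^e) p = (e == p).
Proof. rewrite expnE' Nat.pow2_bits_eqb. by case: Nat.eqb_spec => [->|/eqP/negbTE ->]; rewrite ?eqxx. Qed.

Lemma testbit_small x n p : x < 2 ^ n -> n <= p -> Nat.testbit x p = false.
Proof.
move=> hx hp; rewrite testbitE /bitn divn_small //.
apply: (leq_trans hx); by rewrite leq_exp2l.
Qed.

Lemma xorbE x y : xorb x y = x (+) y.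
Proof. by case: x; case: y. Qed.

Lemma testbit_bigxor n (F : 'I_n -> nat) p :
  Nat.testbit (\big[xorn/0]_(j < n) F j) p = \big[addb/false]_(j < n) Nat.testbit (F j) p.
Proof.
elim: n F => [|n IH] F; first by rewrite !big_ord0 Nat.bits_0.
by rewrite !big_ord_recr /= /xorn Nat.lxor_spec IH xorbE.
Qed.

Lemma tb_cpow (c : bool) e p : Nat.testbit (c * 2^e) p = c && (e == p).
Proof. case: c; rewrite ?mul1n ?mul0n ?testbit_pow2 ?Nat.bits_0 //. Qed.

Lemma bits_expand n x : x < 2 ^ n -> \big[xorn/0]_(j < n) (bitn x j * 2^j) = x.
Proof.
move=> hx; apply: Nat.bits_inj => p. rewrite testbit_bigxor.
case: (ltnP p n) => hp.
  rewrite (bigD1 (Ordinal hp)) //= tb_cpow eqxx andbT big1 ?addbF ?testbitE //.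
  move=> j /negbTE hj; rewrite tb_cpow.
  suff -> : (nat_of_ord j == p) = false by rewrite andbF.
  apply/negbTE; apply: contraFN hj => /eqP hj'; apply/eqP; exact: val_inj.
rewrite (@testbit_small x n p hx hp) big1 // => j _; rewrite tb_cpow.
suff -> : (nat_of_ord j == p) = false by rewrite andbF.
by apply/negbTE; rewrite neq_ltn (leq_trans (ltn_ord j) hp).
Qed.

Lemma sum_xor n (c : nat -> bool) (e : nat -> nat) :
  (forall i j, i < n -> j < n -> e i = e j -> i = j) ->
  \sum_(j < n) c j * 2^(e j) = \big[xorn/0]_(j < n) (c j * 2^(e j)).
Proof.
elim: n => [|n IH] hinj; first by rewrite !big_ord0.
rewrite !big_ord_recr /= IH; last first.
  move=> i j hi hj; apply: hinj; exact: ltnW.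
rewrite addnE Nat.add_nocarry_lxor //.
apply: Nat.bits_inj_0 => p.
rewrite Nat.land_spec testbit_bigxor tb_cpow.
case hc: (c n); last by rewrite andbF.
case: eqP => [<-|] /=; last by rewrite andbF.
rewrite andbT big1 // => j _. rewrite tb_cpow.
case: eqP; rewrite ?andbF // => /hinj h.
by have := h (ltnW (ltn_ord j)) (ltnSn n) => hj; move: (ltn_ord j); rewrite hj ltnn.
Qed.

Definition Lmap (a : nat) (sg : nat -> nat) (v : nat) : nat :=
  \big[xorn/0]_(p < a) (if Nat.testbit v p then sg p else 0).

Lemma L_xor a sg v w : Lmap a sg (xorn v w) = xorn (Lmap a sg v) (Lmap a sg w).
Proof.
rewrite /Lmap -big_split; apply: eq_bigr => p _ /=.
rewrite /xorn Nat.lxor_spec.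
by case: (Nat.testbit v p); case: (Nat.testbit w p);
  rewrite /= ?Nat.lxor_0_l ?Nat.lxor_0_r ?Nat.lxor_nilpotent.
Qed.

Lemma L_0 a sg : Lmap a sg 0 = 0.
Proof. by rewrite /Lmap big1 // => p _; rewrite Nat.bits_0. Qed.

Lemma L_cpow a sg (c : bool) e : e < a -> Lmap a sg (c * 2 ^ e) = if c then sg e else 0.
Proof.
move=> he; case: c; last by rewrite mul0n L_0.
rewrite mul1n /Lmap (bigD1 (Ordinal he)) //= testbit_pow2 eqxx big1; first by rewrite /xorn Nat.lxor_0_r.
move=> j hj.
rewrite testbit_pow2; case: eqP => // hj'.
by move: hj; rewrite -val_eqE /= hj' eqxx.
Qed.

Lemma L_bigxor a sg n (F : 'I_n -> nat) :
  Lmap a sg (\big[xorn/0]_(j < n) F j) = \big[xorn/0]_(j < n) Lmap a sg (F j).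
Proof.
elim: n F => [|n IH] F; first by rewrite !big_ord0 L_0.
by rewrite !big_ord_recr /= L_xor IH.
Qed.

Lemma L_foldr a sg s : Lmap a sg (foldr xorn 0 s) = foldr xorn 0 (map (Lmap a sg) s).
Proof. elim: s => [|v s IH] /=; first exact: L_0. by rewrite L_xor IH. Qed.

Ltac prep := repeat match goal with
 | H : is_true (leq _ _) |- _ => move/leP: H => H
 | H : is_true (_ != _) |- _ => move/eqP: H => H
 | H : is_true (_ == _) |- _ => move/eqP: H => H
 | H : context [double ?x] |- _ => rewrite -(muln2 x) in H
 | H : context [addn] |- _ => rewrite addnE in H
 | H : context [subn] |- _ => rewrite subnE in H
 | H : context [muln] |- _ => rewrite mulnE in H
 | |- is_true (leq _ _) => apply/leP
 | |- context [double ?x] => rewrite -(muln2 x)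
 | |- context [addn] => rewrite addnE
 | |- context [subn] => rewrite subnE
 | |- context [muln] => rewrite mulnE
 end.

Definition Bof (a : nat) : nat := 2 ^ trunc_log 2 a.
Definition sig (a p : nat) : nat :=
  let B := Bof a in let r := a - B in
  if p == 0 then B else if odd p then p.+1./2
  else if p./2 <= r then B + p./2 else a./2 + p./2 - r.

Lemma Bfacts a : 1 <= a -> 1 <= Bof a /\ Bof a <= a /\ a < Bof a * 2.
Proof.
move=> ha; have := trunc_log_bounds (ltnSn 1) ha => /= /andP [h1 h2].
rewrite /Bof expn_gt0 /= h1; split => //; split => //. by rewrite -expnSr.
Qed.

Lemma Beven a : 2 <= a -> exists B', Bof a = B' * 2.
Proof.
move=> ha; exists (2 ^ (trunc_log 2 a).-1); rewrite -expnSr prednK //.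
by rewrite trunc_log_gt0.
Qed.

Lemma sig_spec a p : 1 <= a -> p < a ->
  (p = 0 /\ sig a p = Bof a) \/
  (odd p /\ sig a p = (p./2).+1) \/
  (p <> 0 /\ ~~ odd p /\ p./2 <= a - Bof a /\ sig a p = Bof a + p./2) \/
  (~~ odd p /\ a - Bof a < p./2 /\ sig a p = a./2 + p./2 - (a - Bof a)).
Proof.
move=> ha hp; rewrite /sig /=.
case: eqP => [->|hp0]; first by left.
right; case ho: (odd p).
  by left; split => //; rewrite uphalf_half ho.
right; case: ifP => hk; [left|right] => //.
by rewrite ltnNge hk.
Qed.

Lemma half_spec n : n = (2 * n./2)%coq_nat \/ n = (2 * n./2 + 1)%coq_nat.
Proof. have := odd_double_half n; case: (odd n) => /= h; prep; lia. Qed.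

Lemma sig_spec' a p : 1 <= a -> p < a -> exists k,
  (p = 0 /\ sig a p = Bof a) \/
  (p = (2 * k + 1)%coq_nat /\ sig a p = (k + 1)%coq_nat) \/
  (p = (2 * k)%coq_nat /\ (1 <= k)%coq_nat /\ (k <= a - Bof a)%coq_nat /\ sig a p = (Bof a + k)%coq_nat) \/
  (p = (2 * k)%coq_nat /\ (a - Bof a < k)%coq_nat /\ sig a p = (a./2 + k - (a - Bof a))%coq_nat).
Proof.
move=> ha hp; exists p./2; rewrite /sig /=.
have Ep := odd_double_half p.
case: eqP => [->|hp0]; first by left.
right; case ho: (odd p).
  left; rewrite uphalf_half ho; move: Ep; rewrite ho /=; move=> Ep; prep; split; lia.
right; move: Ep; rewrite ho /= => Ep.
case: ifP => hk; [left|right]; prep.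
  split; first lia. split; first lia. split; first lia. reflexivity.
move/negbT: hk; rewrite -ltnNge => hk; prep. split; first lia. split; first lia. reflexivity.
Qed.

Lemma sig_inj a p p' : 1 <= a -> p < a -> p' < a -> sig a p = sig a p' -> p = p'.
Proof.
move=> ha hp hp' e.
have [hB1 [hB2 hB3]] := Bfacts a ha.
have Ea := half_spec a.
have [k Hk] := sig_spec' a p ha hp; have [k' Hk'] := sig_spec' a p' ha hp'.
prep; lia.
Qed.

Lemma sig_rng a p : 1 <= a -> p < a -> 1 <= sig a p <= a.
Proof.
move=> ha hp; have [hB1 [hB2 hB3]] := Bfacts a ha.
have Ea := half_spec a.
have [k Hk] := sig_spec' a p ha hp.
apply/andP; split; prep; lia.
Qed.

Lemma mpar_eq a : 1 <= a -> mpar a = (Bof a * 2 - a - 1).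
Proof. by move=> ha; rewrite /mpar /bpar expnSr. Qed.

Lemma sig_Q a k : 1 <= a -> a - mpar a <= k < a -> sig a k < Bof a /\ a < Bof a + sig a k.
Proof.
move=> ha /andP [hk1 hk2]; have [hB1 [hB2 hB3]] := Bfacts a ha.
rewrite mpar_eq // in hk1.
have Ea := half_spec a.
have [k' Hk] := sig_spec' a k ha hk2.
split; prep; lia.
Qed.

Definition Epos (t j : nat) : nat := if j < t then 2 ^ j.+1 - 1 else 0.

Lemma sig_E a j : 1 <= a -> j <= trunc_log 2 a ->
  Epos (trunc_log 2 a) j < a /\ sig a (Epos (trunc_log 2 a) j) = 2 ^ j.
Proof.
move=> ha hj; have [hB1 [hB2 hB3]] := Bfacts a ha.
rewrite /Epos; case: (ltnP j (trunc_log 2 a)) => hjt; last first.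
  have -> : j = trunc_log 2 a by apply/eqP; rewrite eqn_leq hj hjt.
  by rewrite /sig eqxx; split.
have hX : 2 ^ j.+1 <= Bof a by rewrite /Bof leq_exp2l.
have hX2 : 2 ^ j.+1 = 2 ^ j * 2 by rewrite expnSr.
have hX1 : 1 <= 2 ^ j by rewrite expn_gt0.
have hp : 2 ^ j.+1 - 1 < a.
  move: hX hX2 hX1; set X := 2 ^ j; set Y := 2 ^ j.+1; move=> hX hX2 hX1; prep; lia.
split => //.
have [k Hk] := sig_spec' a _ ha hp.
move: hX2 Hk; set X := 2 ^ j; set Y := 2 ^ j.+1; move=> hX2 Hk.
prep; lia.
Qed.

Lemma pow2_is j : is_pow2 (2 ^ j).
Proof. apply/hasP; exists j => //; rewrite mem_iota /= add0n ltnS ltnW // ltn_expl //. Qed.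

Lemma is_pow2P x : is_pow2 x -> exists k, x = 2 ^ k.
Proof. by move/hasP => [k _ /eqP ->]; exists k. Qed.

Lemma pow2_double x : 1 <= x -> ~~ is_pow2 x -> ~~ is_pow2 (x * 2).
Proof.
move=> hx hnp; apply/negP => /is_pow2P [k hk].
case: k hk => [|k] hk; first by move: hk; rewrite expn0; case: x hx {hnp}.
rewrite expnSr in hk; move/eqP: hk; rewrite eqn_mul2r /= => /eqP hk.
by move: hnp; rewrite hk pow2_is.
Qed.

Lemma pow2_odd y : odd y -> 1 < y -> ~~ is_pow2 y.
Proof.
move=> ho hy; apply/negP => /is_pow2P [k hk].
move: ho hy; rewrite hk oddX /=; case: k {hk} => //.
Qed.

Lemma Mset_mem a y : (y \in Mset a) = (1 <= y <= a) && ~~ is_pow2 y.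
Proof. by rewrite /Mset mem_filter mem_iota andbC add1n ltnS. Qed.

Lemma fmap_spec a x : 1 <= a -> x \in Mset a -> fmap a x - 1 < a /\ sig a (fmap a x - 1) = x.
Proof.
move=> ha; rewrite Mset_mem => /andP [/andP [hx1 hxa] hnp].
have [hB1 [hB2 hB3]] := Bfacts a ha.
have Ea := half_spec a.
rewrite /fmap /f'map /gmap /bpar /= expnSr -/(Bof a) /bitn -/(Bof a).
case: (ltnP x (Bof a)) => hxB.
  rewrite divn_small //=.
  case h2: (2 * x <= a).
    have -> : 2 * x \in Mset a.
      rewrite Mset_mem h2 andbT; apply/andP; split; first by prep; lia.
      by rewrite mulnC pow2_double.
    have h2' : 2 * x <= a by rewrite h2.
    have hq : 2 * x - 1 < a by prep; lia.
    have [k Hk] := sig_spec' a _ ha hq.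
    split => //; prep; lia.
  have -> : (2 * x \in Mset a) = false by rewrite Mset_mem h2 andbF.
  have [B' hB'] : exists B', Bof a = B' * 2.
    apply: Beven; apply: leq_trans hxa; case: x hx1 hnp {hxB h2} => [|[|x]] //.
  have Em := odd_double_half (Bof a * 2 - a - 1).
  rewrite -mpar_eq // in Em; rewrite uphalf_half.
  have hm := mpar_eq a ha.
  move: Em; case: (odd (mpar a)) => /= Em.
    have hq : 2 * x + 1 - 2 * (1 + (mpar a)./2) - 1 < a.
      move/negbT: h2; rewrite -ltnNge => h2. prep; lia.
    have [k Hk] := sig_spec' a _ ha hq.
    move/negbT: h2; rewrite -ltnNge => h2.
    split => //; prep; lia.
  have hq : 2 * x + 1 - 2 * (0 + (mpar a)./2) - 1 < a.
    move/negbT: h2; rewrite -ltnNge => h2. prep; lia.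
  have [k Hk] := sig_spec' a _ ha hq.
  move/negbT: h2; rewrite -ltnNge => h2.
  split => //; prep; lia.
have hxB' : Bof a < x.
  rewrite ltn_neqAle hxB andbT; apply/negP => /eqP hxe.
  by move: hnp; rewrite -hxe /Bof pow2_is.
have -> : x %/ Bof a = 1.
  have -> : x = 1 * Bof a + (x - Bof a) by rewrite mul1n subnKC.
  rewrite divnMDl // divn_small //. by prep; lia.
have hg : (2 * x).+1 - Bof a * 2 = ((x - Bof a) * 2).+1 by prep; lia.
rewrite /= hg.
have -> : ((x - Bof a) * 2).+1 \in Mset a.
  have ho : odd ((x - Bof a) * 2).+1 by rewrite oddS oddM andbF.
  have h1 : 1 < ((x - Bof a) * 2).+1 by prep; lia.
  rewrite Mset_mem (pow2_odd _ ho h1) andbT; apply/andP; split; prep; lia.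
have hq : ((x - Bof a) * 2).+1 - 1 < a by prep; lia.
have [k Hk] := sig_spec' a _ ha hq.
split => //; prep; lia.
Qed.

Lemma L_hmap a x : 1 <= a -> x \in Mset a -> Lmap a (sig a) (hmap a x) = 0.
Proof.
move=> ha hx.
have [hq1 hq2] := fmap_spec a x ha hx.
have hnp : ~~ is_pow2 x by move: hx; rewrite Mset_mem => /andP [].
have hxa : x <= a by move: hx; rewrite Mset_mem => /andP [/andP []].
have [hB1 [hB2 hB3]] := Bfacts a ha.
set t := trunc_log 2 a.
set q := fmap a x - 1.
pose c j := if j <= t then bitn x j else true.
pose e j := if j <= t then Epos t j else q.
have Eh : hmap a x = \sum_(j < t.+2) c j * 2 ^ (e j).
  rewrite /hmap /= -/t -/q !big_ord_recr /= big_mkord.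
  rewrite /c /e leqnn ltnn /Epos ltnn expn0 mul1n muln1.
  have -> : \sum_(i < t) (if i <= t then bitn x i else true) *
      2 ^ (if i <= t then (if i < t then 2 ^ i.+1 - 1 else 0) else q) =
    \sum_(i < t) bitn x i * 2 ^ (2 ^ i.+1 - 1).
    apply: eq_bigr => i _; by rewrite (ltnW (ltn_ord i)) (ltn_ord i).
  by rewrite [RHS]addnC addnA.
have key : forall i, i < t.+2 -> e i < a /\ sig a (e i) = if i <= t then 2 ^ i else x.
  move=> i hi; rewrite /e; case: ifP => hit; first exact: sig_E.
  by split.
have hinj : forall i j, i < t.+2 -> j < t.+2 -> e i = e j -> i = j.
  move=> i j hi hj hij.
  have [_ ki] := key i hi; have [_ kj] := key j hj.
  rewrite hij kj in ki.
  move: ki; case: ifP => hjt; case: ifP => hit.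
  - by move/eqP; rewrite eqn_exp2l // => /eqP.
  - by move=> hx'; move: hnp; first [rewrite hx' pow2_is | rewrite -hx' pow2_is].
  - by move=> hx'; move: hnp; first [rewrite hx' pow2_is | rewrite -hx' pow2_is].
  - move=> _; move/negbT: hit; move/negbT: hjt.
    rewrite -!ltnNge => hjt hit; prep; lia.
rewrite Eh sum_xor // L_bigxor.
rewrite (eq_bigr (fun j : 'I_t.+2 => if j <= t then bitn x j * 2 ^ j else x)); last first.
  move=> j _; have [k1 k2] := key j (ltn_ord j).
  rewrite L_cpow // k2 /c; case: (j <= t) => //; by case: (bitn x j); rewrite ?mul1n ?mul0n.
rewrite big_ord_recr /= ltnn.
rewrite (eq_bigr (fun j : 'I_t.+1 => bitn x j * 2 ^ j)); last by move=> j _; rewrite -ltnS (ltn_ord j).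
rewrite bits_expand; first by rewrite /xorn Nat.lxor_nilpotent.
by rewrite expnSr; apply: leq_ltn_trans hxa hB3.
Qed.

Lemma xorK x y : xorn (xorn x y) y = x.
Proof. by rewrite /xorn Nat.lxor_assoc Nat.lxor_nilpotent Nat.lxor_0_r. Qed.

Lemma T_cls a t : 1 <= a -> t \in Tset a ->
  t = 0 \/ (exists2 k, k < a & t = 2 ^ k) \/
  (exists2 k, a - mpar a <= k < a & t = xorn 1 (2 ^ k)).
Proof.
move=> ha; have [hB1 [hB2 hB3]] := Bfacts a ha.
rewrite /Tset mem_cat => /orP [].
  rewrite /Pset in_cons => /orP [/eqP -> |]; first by left.
  move/mapP => [k]; rewrite mem_iota add0n => /andP [_ hk] ->.
  by right; left; exists k.
rewrite /Qset; case: ifP => _ //.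
move/mapP => [k]; rewrite mem_iota => hk ->.
right; right; exists k => //.
have hm : mpar a <= a by rewrite mpar_eq //; prep; lia.
by rewrite subnK in hk.
Qed.

Lemma xor_B a y : 1 <= a -> y < Bof a -> xorn (Bof a) y = Bof a + y.
Proof.
move=> ha hy; rewrite /xorn -Nat.add_nocarry_lxor ?addnE //.
apply: Nat.bits_inj_0 => p; rewrite Nat.land_spec /Bof testbit_pow2.
case: eqP => [<-|] //=; exact: (@testbit_small y (trunc_log 2 a)).
Qed.

Lemma L_T_inj a t1 t2 : 1 <= a -> t1 \in Tset a -> t2 \in Tset a ->
  Lmap a (sig a) t1 = Lmap a (sig a) t2 -> t1 = t2.
Proof.
move=> ha h1 h2.
have [hB1 [hB2 hB3]] := Bfacts a ha.
have LQ : forall k, a - mpar a <= k < a ->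
    Lmap a (sig a) (xorn 1 (2 ^ k)) = Bof a + sig a k /\ sig a k < Bof a /\ a < Bof a + sig a k.
  move=> k hk; have [q1 q2] := sig_Q a k ha hk.
  have hk' : k < a by case/andP: hk.
  have -> : xorn 1 (2 ^ k) = xorn (true * 2 ^ 0) (true * 2 ^ k) by rewrite expn0 !mul1n.
  rewrite L_xor !L_cpow //=.
  by rewrite {1}/sig eqxx xor_B.
have LP : forall k, k < a -> Lmap a (sig a) (2 ^ k) = sig a k /\ 1 <= sig a k <= a.
  move=> k hk; have -> : 2 ^ k = true * 2 ^ k by rewrite mul1n.
  rewrite L_cpow //; split => //; exact: sig_rng.
have L0 := L_0 a (sig a).
case: (T_cls a t1 ha h1) => [->|[[k hk ->]|[k hk ->]]];
case: (T_cls a t2 ha h2) => [->|[[k' hk' ->]|[k' hk' ->]]] //.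
- have [-> /andP [h _]] := LP k' hk'; rewrite L0 => e; prep; lia.
- have [-> [_ h]] := LQ k' hk'; rewrite L0 => e; prep; lia.
- have [-> /andP [h _]] := LP k hk; rewrite L0 => e; prep; lia.
- have [-> _] := LP k hk; have [-> _] := LP k' hk' => e.
  by rewrite (sig_inj a k k' ha hk hk' e).
- have [-> /andP [_ h]] := LP k hk; have [-> [_ h']] := LQ k' hk' => e.
  prep; lia.
- have [-> [_ h]] := LQ k hk; rewrite L0 => e; prep; lia.
- have [-> [_ h]] := LQ k hk; have [-> /andP [_ h']] := LP k' hk' => e.
  prep; lia.
- have hk1 : k < a by case/andP: hk.
  have hk2 : k' < a by case/andP: hk'.
  have [-> _] := LQ k hk; have [-> _] := LQ k' hk' => /eqP; rewrite eqn_add2l => /eqP e.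
  by rewrite (sig_inj a k k' ha hk1 hk2 e).
Qed.

Theorem mainTheorem3 (a : nat) (ha : 1 <= a) (i j : nat) :
  inS a i -> inS a j -> i <> j ->
  forall t : nat, t \in Tshift a i -> t \in Tshift a j -> False.
Proof.
have LS : forall v, inS a v -> Lmap a (sig a) v = 0.
  move=> v [s [hs <-]]; rewrite L_foldr.
  elim: s hs => [|w s IH] //= /andP [hw hs].
  move/mapP: hw => [x hx ->]; by rewrite L_hmap // IH.
move=> hi hj hij t /mapP [t1 ht1 e1] /mapP [t2 ht2 e2].
have Lt1 : Lmap a (sig a) t = Lmap a (sig a) t1 by rewrite e1 L_xor LS // xor0n.
have Lt2 : Lmap a (sig a) t = Lmap a (sig a) t2 by rewrite e2 L_xor LS // xor0n.
have e12 := L_T_inj a t1 t2 ha ht1 ht2 (etrans (esym Lt1) Lt2).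
apply: hij; rewrite -(xorK i t1) -e1 e2 e12 xorK //.
Qed.
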